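(* Let $L=K$, let ${\bf X}$ and ${\bf Z}$ be real $n\times K$ matrices, ${\bf D_X},{\bf D_Z}$ diagonal $K\times K$ matrices, $\Psi_n=\frac1n{\bf D_Z}{\bf Z}^T{\bf X}{\bf D_X}$, $c\in(0,1)$ and $J\subseteq\{1,\dots,K\}$ nonempty. Suppose that for some $\widetilde\kappa>0$ $$\inf_{\Delta\in C_J\setminus\{0\}}\frac{|{\bf X}{\bf D_X}\Delta|_2}{\sqrt n\,|\Delta_J|_2}\ge\widetilde\kappa,$$ and that for some $0<\eta<1$ $$\Big|\frac1n\big({\bf X}{\bf D_X}-{\bf Z}{\bf D_Z}\big)^T{\bf X}{\bf D_X}\Big|_\infty\le\frac{\eta(1-c)^2\widetilde\kappa^2}{4|J|},$$ where for a matrix $|\cdot|_\infty$ denotes the maximal absolute entry. Then $$\kappa_{1,J}\ge\frac{(1-\eta)(1-c)^2\widetilde\kappa^2}{4|J|}.$$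
   Context: $\Delta_J$ zeroes coordinates outside $J$, $J^c$ complement, $|\cdot|_p$ the $\ell_p$ norm of a vector. $C_J=\{\Delta\in\mathbb R^K:|\Delta_{J^c}|_1\le\frac{1+c}{1-c}|\Delta_J|_1\}$; $\kappa_{1,J}=\inf\{|\Psi_n\Delta|_\infty:\Delta\in C_J,|\Delta|_1=1\}$. In the paper ${\bf D_X}={\rm diag}(x_{k*}^{-1})$ and ${\bf D_Z}={\rm diag}(z_{l*}^{-1})$ with $x_{k*},z_{l*}$ the maximal absolute entries of the columns of ${\bf X},{\bf Z}$. *)

(* Defs.v *)
(* R : rcfType (needed for Num.sqrt). *)
From HB Require Import structures.
From mathcomp Require Import all_boot all_order all_algebra.
Set Implicit Arguments. Unset Strict Implicit. Unset Printing Implicit Defensive.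
Import Order.TTheory GRing.Theory Num.Theory.
Local Open Scope ring_scope.

(* Delta_J : zero the coordinates outside J *)
Definition restrict (R : rcfType) (K : nat) (J : {set 'I_K}) (v : 'cV[R]_K) : 'cV[R]_K :=
  \col_i (if i \in J then v i 0 else 0).

Definition norm1 (R : rcfType) (K : nat) (v : 'cV[R]_K) : R := \sum_i `|v i 0|.
Definition norm2 (R : rcfType) (K : nat) (v : 'cV[R]_K) : R :=
  Num.sqrt (\sum_i (v i 0) ^+ 2).

(* maximal absolute entry of a matrix (also the l_infty norm of a column vector) *)
Definition normInf (R : rcfType) (m p : nat) (A : 'M[R]_(m, p)) : R :=
  \big[Num.max/0]_(i < m) \big[Num.max/0]_(j < p) `|A i j|.

Definition in_cone (R : rcfType) (K : nat) (c : R) (J : {set 'I_K}) (v : 'cV[R]_K) : Prop :=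
  norm1 (restrict (~: J) v) <= (1 + c) / (1 - c) * norm1 (restrict J v).

Definition Psi (R : rcfType) (n K : nat) (X Z : 'M[R]_(n, K)) (DX DZ : 'M[R]_K) : 'M[R]_K :=
  (n%:R)^-1 *: (DZ *m Z^T *m X *m DX).

(* Main.v *)
Require Import Defs.
From HB Require Import structures.
From mathcomp Require Import all_boot all_order all_algebra.
From mathcomp Require Import ring lra.
Import Order.TTheory GRing.Theory Num.Theory.
Set Implicit Arguments. Unset Strict Implicit.
Local Open Scope ring_scope.

Section Aux.
Variable R : rcfType.

Lemma bigmax_ge (I : eqType) (r : seq I) (F : I -> R) x :
  x \in r -> F x <= \big[Num.max/0]_(i <- r) F i.
Proof.
elim: r => //= a r IH; rewrite inE big_cons => /orP [/eqP ->|/IH h].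
  by rewrite le_max lexx.
by rewrite le_max h orbT.
Qed.

Lemma normInf_ge m p (M : 'M[R]_(m, p)) i j : `|M i j| <= normInf M.
Proof.
rewrite /normInf.
have h1 := bigmax_ge (fun i => \big[Num.max/0]_(j < p) `|M i j|) (mem_index_enum i).
have h2 := bigmax_ge (fun j => `|M i j|) (mem_index_enum j).
exact: le_trans h2 h1.
Qed.

Definition S K (v w : 'cV[R]_K) := \sum_i v i 0 * w i 0.

Lemma S_bound K (v w : 'cV[R]_K) : S v w <= normInf w * norm1 v.
Proof.
rewrite /S /norm1 mulr_sumr; apply: ler_sum => i _.
apply: le_trans (ler_norm _) _; rewrite normrM mulrC.
by apply: ler_wpM2r => //; apply: normInf_ge.
Qed.

Lemma S_bound2 K (M : 'M[R]_K) (u : 'cV[R]_K) :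
  S u (M *m u) <= normInf M * norm1 u * norm1 u.
Proof.
rewrite /S /norm1 [_ * \sum__ _]mulr_sumr; apply: ler_sum => i _.
apply: le_trans (ler_norm _) _; rewrite normrM mulrC mxE.
apply: ler_wpM2r => //.
apply: le_trans (ler_norm_sum _ _ _) _.
rewrite mulr_sumr; apply: ler_sum => j _.
rewrite normrM; apply: ler_wpM2r => //; exact: normInf_ge.
Qed.

Lemma S_gram n K (A : 'M[R]_(n, K)) (u : 'cV[R]_K) :
  S u (A^T *m (A *m u)) = \sum_k ((A *m u) k 0) ^+ 2.
Proof.
have -> : S u (A^T *m (A *m u)) = (u^T *m (A^T *m (A *m u))) 0 0.
  rewrite /S [in RHS]mxE; apply: eq_bigr => i _; congr (_ * _).
  by rewrite mxE.
rewrite mulmxA -trmx_mul [in LHS]mxE; apply: eq_bigr => i _.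
by rewrite [X in X * _]mxE expr2.
Qed.

Lemma SB K (u v w : 'cV[R]_K) : S u (v - w) = S u v - S u w.
Proof.
rewrite /S -sumrB; apply: eq_bigr => i _; by rewrite !mxE mulrBr.
Qed.

Lemma CS K (J : {set 'I_K}) (f : 'I_K -> R) :
  (\sum_(i in J) f i) ^+ 2 <= #|J|%:R * \sum_(i in J) f i ^+ 2.
Proof.
have H : 0 <= \sum_(i in J) \sum_(j in J) (f i - f j) ^+ 2.
  by apply: sumr_ge0 => i _; apply: sumr_ge0 => j _; apply: sqr_ge0.
have E : \sum_(i in J) \sum_(j in J) (f i - f j) ^+ 2
   = (#|J|%:R * \sum_(i in J) f i ^+ 2) *+ 2 - (\sum_(i in J) f i) ^+ 2 *+ 2.
  rewrite (eq_bigr (fun i => \sum_(j in J) f i ^+ 2 - (f i * \sum_(j in J) f j) *+ 2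
      + \sum_(j in J) f j ^+ 2)); last first.
    move=> i _; rewrite mulr_sumr -sumrMnl -sumrB -big_split; apply: eq_bigr => j _.
    exact: sqrrB.
  rewrite big_split sumrB /= !sumr_const sumrMnl -mulr_suml.
  under eq_bigr do rewrite sumr_const.
  rewrite sumrMnl. set a := \sum_(i in J) _ ^+ 2. set b := \sum_(i in J) f i.
  ring.
rewrite E subr_ge0 in H.
rewrite -(ler_pMn2r (n:=2)) //.
Qed.


Lemma SZ K (u w : 'cV[R]_K) a : S u (a *: w) = a * S u w.
Proof. rewrite /S mulr_sumr; apply: eq_bigr => i _; rewrite mxE; ring. Qed.

Lemma norm1_split K (J : {set 'I_K}) (u : 'cV[R]_K) :
  norm1 u = norm1 (restrict J u) + norm1 (restrict (~: J) u).
Proof.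
rewrite /norm1 -big_split; apply: eq_bigr => i _; rewrite !mxE inE.
by case: (i \in J); rewrite /= normr0 ?addr0 ?add0r.
Qed.

Lemma norm1_restr K (J : {set 'I_K}) (u : 'cV[R]_K) :
  norm1 (restrict J u) = \sum_(i in J) `|u i 0|.
Proof.
rewrite /norm1 [RHS]big_mkcond; apply: eq_bigr => i _; rewrite !mxE.
by case: (i \in J); rewrite ?normr0.
Qed.

Lemma norm2_restr K (J : {set 'I_K}) (u : 'cV[R]_K) :
  norm2 (restrict J u) = Num.sqrt (\sum_(i in J) u i 0 ^+ 2).
Proof.
rewrite /norm2 [in RHS]big_mkcond; congr Num.sqrt; apply: eq_bigr => i _; rewrite !mxE.
by case: (i \in J); rewrite ?expr0n.
Qed.

End Aux.

Theorem proposition4 (R : rcfType) (n K : nat) (X Z : 'M[R]_(n, K))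
  (DX DZ : 'M[R]_K) (c : R) (J : {set 'I_K}) (kt eta : R) :
  (0 < n)%N ->
  is_diag_mx DX -> is_diag_mx DZ ->
  0 < c -> c < 1 ->
  J != set0 ->
  0 < kt ->
  (* inf over C_J \ {0} of |X D_X Delta|_2 / (sqrt n |Delta_J|_2) >= kt *)
  (forall Delta : 'cV[R]_K, in_cone c J Delta -> Delta != 0 ->
     kt <= norm2 (X *m DX *m Delta) / (Num.sqrt n%:R * norm2 (restrict J Delta))) ->
  0 < eta -> eta < 1 ->
  normInf ((n%:R)^-1 *: ((X *m DX - Z *m DZ)^T *m (X *m DX)))
    <= eta * (1 - c) ^+ 2 * kt ^+ 2 / (4 * #|J|%:R) ->
  (* kappa_{1,J} = inf {|Psi_n Delta|_infty : Delta in C_J, |Delta|_1 = 1} >= bound *)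
  forall Delta : 'cV[R]_K, in_cone c J Delta -> norm1 Delta = 1 ->
    (1 - eta) * (1 - c) ^+ 2 * kt ^+ 2 / (4 * #|J|%:R)
      <= normInf (Psi X Z DX DZ *m Delta).
Proof.
move=> n0 dX dZ c0 c1 J0 kt0 hk eta0 eta1 hE u hcone hu1.
set A := X *m DX in hk hE *. set B := Z *m DZ in hE *.
have DZT : DZ^T = DZ.
  apply/matrixP => i j; rewrite mxE; case: (eqVneq i j) => [->//|ne].
  move/is_diag_mxP: dZ => dZ; rewrite !dZ //.
  by rewrite eq_sym.
set G := (n%:R)^-1 *: (A^T *m A).
set E := (n%:R)^-1 *: ((A - B)^T *m A) in hE.
have PsiE : Psi X Z DX DZ = G - E.
  rewrite /Psi /G /E -scalerBr -mulmxBl.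
  have -> : A^T - (A - B)^T = B^T by rewrite linearB /= opprB addrC subrK.
  by rewrite /B trmx_mul DZT /A !mulmxA.
have n0R : 0 < n%:R :> R by rewrite ltr0n.
set N := #|J|%:R : R.
have N0 : 0 < N by rewrite ltr0n card_gt0.
set s2 := \sum_(i in J) u i 0 ^+ 2.
have s2ge0 : 0 <= s2 by apply: sumr_ge0 => i _; apply: sqr_ge0.
set a := norm1 (restrict J u).
have a0 : 0 <= a by rewrite /a /norm1; apply: sumr_ge0 => i _.
have hCS : a ^+ 2 <= N * s2.
  rewrite /a norm1_restr /s2.
  have := CS J (fun i => `|u i 0|) => /=.
  suff -> : \sum_(i in J) `|u i 0| ^+ 2 = \sum_(i in J) u i 0 ^+ 2 by [].
  by apply: eq_bigr => i _; rewrite real_normK ?num_real.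
have hac : 1 - c <= 2 * a.
  move: hcone; rewrite /in_cone -/a => h.
  have hs := norm1_split J u; rewrite hu1 -/a in hs.
  set b := norm1 (restrict (~: J) u) in h hs.
  have h' : b * (1 - c) <= (1 + c) * a.
    by move: h; rewrite mulrAC ler_pdivlMr // subr_gt0.
  have hb : b = 1 - a by rewrite hs; ring.
  rewrite hb in h'; nra.
have hs2 : (1 - c) ^+ 2 <= 4 * N * s2.
  have h1 : 0 <= (2*a - (1-c)) * (2*a + (1-c)) by apply: mulr_ge0; lra.
  have h2 : (1 - c) ^+ 2 <= (2 * a) ^+ 2 by nra.
  nra.
have s2pos : 0 < s2.
  have : 0 < (1 - c) ^+ 2 by rewrite exprn_gt0 // subr_gt0.
  nra.
have u0 : u != 0.
  apply/eqP => h; move: hu1; rewrite h /norm1 big1 => [|i _]; last by rewrite mxE normr0.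
  by move/eqP; rewrite eq_sym oner_eq0.
have hk1 := hk u hcone u0.
rewrite norm2_restr -/s2 in hk1.
set w := norm2 (A *m u) in hk1.
have w0 : 0 <= w by apply: sqrtr_ge0.
have q0 : 0 < Num.sqrt n%:R * Num.sqrt s2 by rewrite mulr_gt0 ?sqrtr_gt0.
rewrite ler_pdivlMr // in hk1.
have hk2 : kt ^+ 2 * (n%:R * s2) <= w ^+ 2.
  have hq : (kt * (Num.sqrt n%:R * Num.sqrt s2)) ^+ 2 <= w ^+ 2.
    by rewrite (ler_pXn2r (n:=2)) // nnegrE mulr_ge0 // ltW.
  by move: hq; rewrite !exprMn (sqr_sqrtr (ltW n0R)) (sqr_sqrtr s2ge0) mulrA.
have hw2 : w ^+ 2 = \sum_k ((A *m u) k 0) ^+ 2.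
  by rewrite /w /norm2 sqr_sqrtr //; apply: sumr_ge0 => k _; apply: sqr_ge0.
have SG : S (u) (G *m u) = (n%:R)^-1 * w ^+ 2.
  by rewrite /G -scalemxAl SZ -mulmxA S_gram hw2.
have SGb : kt ^+ 2 * s2 <= S u (G *m u).
  rewrite SG ler_pdivlMl //; lra.
have SE : S u (E *m u) <= normInf E by have := S_bound2 E u; rewrite hu1 !mulr1.
have SP : S u (Psi X Z DX DZ *m u) <= normInf (Psi X Z DX DZ *m u).
  by have := S_bound u (Psi X Z DX DZ *m u); rewrite hu1 mulr1.
have SP' : S u (G *m u) - S u (E *m u) <= normInf (Psi X Z DX DZ *m u).
  by rewrite -SB -mulmxBl -PsiE.
set t := (1 - c) ^+ 2 * kt ^+ 2 / (4 * N).
have ht : t <= kt ^+ 2 * s2.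
  rewrite /t ler_pdivrMr ?mulr_gt0 //; nra.
have -> : (1 - eta) * (1 - c) ^+ 2 * kt ^+ 2 / (4 * N) = t - eta * t by rewrite /t; ring.
have hE' : normInf E <= eta * t.
  apply: (le_trans hE); rewrite le_eqVlt; apply/orP; left; apply/eqP.
  by rewrite /t /N; ring.
nra.
Qed.
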